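(* Let $\Lambda\ge1$ and $\kappa_1=258/\pi$. Then for all $0\le r\le2\Lambda$, $$|U_\Lambda(r)-U(r)|\le\kappa_1\frac{r}{2E(\Lambda)}.$$
   Context: $E(r)=(1+r^2)^{1/2}$. $B_\Lambda=\frac1\pi\int_0^{\Lambda/E(\Lambda)}\frac{z^2-z^4/3}{1-z^2}dz$. For $0\le r\le2\Lambda$, with $Z_\Lambda(r)=(E(\Lambda)-E(\Lambda-r))/r$ (and $Z_\Lambda(0)=\Lambda/E(\Lambda)$), $B_\Lambda(r)=\frac1\pi\int_0^{Z_\Lambda(r)}\frac{z^2-z^4/3}{(1-z^2)(1+r^2(1-z^2)/4)}dz+\frac{r}{2\pi}\int_0^{Z_\Lambda(r)}\frac{z-z^3/3}{E(\Lambda)-rz/2}dz$, and $U_\Lambda(r)=B_\Lambda-B_\Lambda(r)$. $U(r)=\frac{r^2}{4\pi}\int_0^1\frac{z^2-z^4/3}{1+r^2(1-z^2)/4}dz$. *)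

(* Defs.v *)
From Stdlib Require Import Reals Lra ClassicalEpsilon.
Open Scope R_scope.

(* Total Riemann integral: equals RiemannInt pr whenever f is Riemann
   integrable on [a,b] (the value does not depend on pr, RiemannInt_P5);
   an arbitrary value otherwise (never used: all integrands below are
   continuous on their intervals). *)
Definition RInt (f : R -> R) (a b : R) : R :=
  epsilon (inhabits 0)
    (fun I => exists pr : Riemann_integrable f a b, RiemannInt pr = I).

Definition E (r : R) : R := sqrt (1 + r ^ 2).

Definition kappa1 : R := 258 / PI.

Definition B0 (L : R) : R :=
  / PI * RInt (fun z => (z ^ 2 - z ^ 4 / 3) / (1 - z ^ 2)) 0 (L / E L).

Definition Z (L r : R) : R :=
  if Req_EM_T r 0 then L / E L else (E L - E (L - r)) / r.

Definition Br (L r : R) : R :=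
  / PI * RInt (fun z => (z ^ 2 - z ^ 4 / 3) /
                        ((1 - z ^ 2) * (1 + r ^ 2 * (1 - z ^ 2) / 4))) 0 (Z L r)
  + r / (2 * PI) * RInt (fun z => (z - z ^ 3 / 3) / (E L - r * z / 2)) 0 (Z L r).

Definition UL (L r : R) : R := B0 L - Br L r.

Definition U (r : R) : R :=
  r ^ 2 / (4 * PI) *
  RInt (fun z => (z ^ 2 - z ^ 4 / 3) / (1 + r ^ 2 * (1 - z ^ 2) / 4)) 0 1.

(* Main.v *)
Require Import Defs.
From Stdlib Require Import Reals Lra Psatz ClassicalEpsilon.
Open Scope R_scope.

Lemma RInt_val f a b (pr : Riemann_integrable f a b) : RInt f a b = RiemannInt pr.
Proof.
  unfold RInt.
  destruct (epsilon_spec (inhabits 0)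
    (fun I => exists pr : Riemann_integrable f a b, RiemannInt pr = I)
    (ex_intro _ (RiemannInt pr) (ex_intro _ pr eq_refl))) as [pr' H].
  rewrite <- H. apply RiemannInt_P5.
Qed.

Definition cont (f : R -> R) a b := forall x, a <= x <= b -> continuity_pt f x.

Lemma RInt_chasles f a b c : a <= b -> b <= c -> cont f a c ->
  RInt f a b + RInt f b c = RInt f a c.
Proof.
  intros hab hbc hc.
  assert (p1 : Riemann_integrable f a b).
  { apply continuity_implies_RiemannInt; auto. intros; apply hc; lra. }
  assert (p2 : Riemann_integrable f b c).
  { apply continuity_implies_RiemannInt; auto. intros; apply hc; lra. }
  assert (p3 : Riemann_integrable f a c).
  { apply continuity_implies_RiemannInt; auto. lra. }
  rewrite (RInt_val _ _ _ p1), (RInt_val _ _ _ p2), (RInt_val _ _ _ p3).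
  apply RiemannInt_P26.
Qed.

Lemma RInt_le f g a b : a <= b -> cont f a b -> cont g a b ->
  (forall x, a <= x <= b -> f x <= g x) -> RInt f a b <= RInt g a b.
Proof.
  intros hab hf hg hle.
  assert (p1 : Riemann_integrable f a b) by (apply continuity_implies_RiemannInt; auto).
  assert (p2 : Riemann_integrable g a b) by (apply continuity_implies_RiemannInt; auto).
  rewrite (RInt_val _ _ _ p1), (RInt_val _ _ _ p2).
  apply RiemannInt_P19; auto. intros; apply hle; lra.
Qed.

Lemma RInt_lin h f g l a b : a <= b -> cont h a b -> cont f a b -> cont g a b ->
  (forall x, a <= x <= b -> h x = f x + l * g x) ->
  RInt h a b = RInt f a b + l * RInt g a b.
Proof.
  intros hab hh hf hg he.
  assert (p1 : Riemann_integrable f a b) by (apply continuity_implies_RiemannInt; auto).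
  assert (p2 : Riemann_integrable g a b) by (apply continuity_implies_RiemannInt; auto).
  assert (p3 : Riemann_integrable (fun x => f x + l * g x) a b).
  { apply continuity_implies_RiemannInt; auto. intros x hx.
    apply continuity_pt_plus; auto. apply continuity_pt_mult; auto.
    apply continuity_pt_const. intros u v; reflexivity. }
  assert (p4 : Riemann_integrable h a b) by (apply continuity_implies_RiemannInt; auto).
  rewrite (RInt_val _ _ _ p1), (RInt_val _ _ _ p2), (RInt_val _ _ _ p4).
  rewrite <- (RiemannInt_P13 p1 p2 p3).
  apply RiemannInt_P18; auto. intros; apply he; lra.
Qed.

Lemma RInt_FTC f F a b : a <= b -> cont f a b ->
  (forall x, a <= x <= b -> derivable_pt_lim F x (f x)) ->
  RInt f a b = F b - F a.
Proof.
  intros H H0 hd.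
  assert (pr : Riemann_integrable f a b) by (apply continuity_implies_RiemannInt; auto).
  rewrite (RInt_val _ _ _ pr).
  rewrite (RiemannInt_P20 H (FTC_P1 H H0) pr).
  assert (H1 := RiemannInt_P29 H H0).
  assert (H2 : antiderivative f F a b).
  { split; auto. intros x hx.
    assert (d : derivable_pt F x) by (exists (f x); apply hd; auto).
    exists d. symmetry. apply derive_pt_eq_0. apply hd; auto. }
  destruct (antiderivative_Ucte f _ _ _ _ H1 H2) as [C H3].
  rewrite !H3; [ring | lra | lra].
Qed.

Lemma cont_const c a b : cont (fun _ => c) a b.
Proof. intros x _. apply continuity_pt_const. intros u v; reflexivity. Qed.

Lemma RInt_const c a b : a <= b -> RInt (fun _ => c) a b = c * (b - a).
Proof.
  intros hab. rewrite (RInt_FTC (fun _ => c) (fun x => c * x) a b hab (cont_const c a b)).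
  - ring.
  - intros x _. assert (H := derivable_pt_lim_scal id c x 1 (derivable_pt_lim_id x)).
    unfold mult_real_fct, id in H. rewrite Rmult_1_r in H. exact H.
Qed.

Lemma RInt_upper f c a b : a <= b -> cont f a b ->
  (forall x, a <= x <= b -> f x <= c) -> RInt f a b <= c * (b - a).
Proof.
  intros hab hf hle. rewrite <- RInt_const by auto.
  apply RInt_le; auto. apply cont_const.
Qed.

Lemma RInt_lower f c a b : a <= b -> cont f a b ->
  (forall x, a <= x <= b -> c <= f x) -> c * (b - a) <= RInt f a b.
Proof.
  intros hab hf hle. rewrite <- RInt_const by auto.
  apply RInt_le; auto. apply cont_const.
Qed.

Lemma div_le_c n d c : 0 < d -> n <= c * d -> n / d <= c.
Proof.
  intros hd h. apply Rmult_le_reg_r with d; auto.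
  unfold Rdiv. rewrite Rmult_assoc, Rinv_l by lra. lra.
Qed.

Lemma div_ge_0 n d : 0 < d -> 0 <= n -> 0 <= n / d.
Proof. intros hd hn. unfold Rdiv. apply Rmult_le_pos; auto. left; apply Rinv_0_lt_compat; auto. Qed.

Lemma deriv_F r x : r <> 0 -> x <> 1 ->
  derivable_pt_lim (fun z => 4 / (r ^ 2 * (1 - z))) x (4 / (r ^ 2 * (1 - x) ^ 2)).
Proof.
  intros hr hx.
  assert (H := derivable_pt_lim_div (fun _ => 4) (fun z => r ^ 2 * (1 - z)) x 0 (r^2 * (0 - 1))
    (derivable_pt_lim_const 4 x)).
  assert (H2 : derivable_pt_lim (fun z => r ^ 2 * (1 - z)) x (r ^ 2 * (0 - 1))).
  { assert (H3 := derivable_pt_lim_scal (fun z => 1 - z) (r ^ 2) x (0 - 1)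
      (derivable_pt_lim_minus (fun _ => 1) id x 0 1 (derivable_pt_lim_const 1 x) (derivable_pt_lim_id x))).
    exact H3. }
  assert (hd : r ^ 2 * (1 - x) <> 0).
  { apply Rmult_integral_contrapositive_currified. apply pow_nonzero; auto. lra. }
  specialize (H H2 hd).
  unfold div_fct in H.
  replace (4 / (r ^ 2 * (1 - x) ^ 2)) with
    ((0 * (r ^ 2 * (1 - x)) - r ^ 2 * (0 - 1) * 4) / (r ^ 2 * (1 - x))²).
  - exact H.
  - unfold Rsqr. field. split; auto. lra.
Qed.

Lemma caseA_num L r E0 E1 : 1 <= L -> 0 < r -> 3 * r <= 2 * L -> 0 < E0 -> E0 ^ 2 = 1 + L ^ 2 ->
  0 < E1 -> E1 ^ 2 = 1 + (L - r) ^ 2 ->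
  E0 ^ 2 * (L / E0 - (E0 - E1) / r) <= 129 * (r / E0).
Proof.
  intros hL hr hr3 h0 hE0 h1 hE1.
  set (D := E0 * E1 - 1 - L * (L - r)).
  set (P := E0 * E1 + 1 + L * (L - r)).
  assert (hDP : D * P = r ^ 2).
  { unfold D, P. replace ((E0 * E1 - 1 - L * (L - r)) * (E0 * E1 + 1 + L * (L - r)))
      with (E0^2 * E1^2 - (1 + L * (L - r))^2) by ring. rewrite hE0, hE1. ring. }
  assert (hP : 0 < P) by (unfold P; nra).
  assert (hE1b : E0 <= 3 * E1).
  { apply Rsqr_incr_0_var; unfold Rsqr; nra. }
  assert (hP3 : E0 ^ 2 <= 3 * P) by (unfold P; nra).
  assert (hD : 0 <= D) by nra.
  replace (E0 ^ 2 * (L / E0 - (E0 - E1) / r)) with (E0 * D / r).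
  2:{ unfold D. field_simplify_eq. 2:{ split; lra. } replace (E0^3) with (E0 * E0^2) by ring; rewrite hE0; ring. }
  apply div_le_c; auto.
  replace (129 * (r / E0) * r) with (129 * r^2 / E0) by (field; lra).
  apply Rmult_le_reg_r with E0; auto.
  replace (129 * r ^ 2 / E0 * E0) with (129 * r^2) by (field; lra).
  nra.
Qed.

Lemma caseB_num L r E0 : 1 <= L -> 2 * L < 3 * r -> r <= 2 * L -> 0 < E0 -> E0 ^ 2 = 1 + L ^ 2 ->
  4 / (r ^ 2 * (1 - L / E0)) <= 129 * (r / E0).
Proof.
  intros hL hr3 hr h0 hE0.
  assert (hEL : L < E0) by nra.
  assert (hE32 : E0 <= 3 / 2 * L) by nra.
  assert (hr0 : 0 < r) by lra.
  replace (4 / (r ^ 2 * (1 - L / E0))) with (4 * E0 * (E0 + L) / r ^ 2).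
  2:{ field_simplify_eq; [| split; nra].
      replace (E0^3) with (E0 * E0^2) by ring; rewrite hE0; ring. }
  apply div_le_c; [nra|].
  replace (129 * (r / E0) * r ^ 2) with (129 * r^3 / E0) by (field; lra).
  apply Rmult_le_reg_r with E0; auto.
  replace (129 * r ^ 3 / E0 * E0) with (129 * r^3) by (field; lra).
  assert (hr3' : 8 * L^3 <= 27 * r ^ 3).
  { assert (2 * L <= 3 * r) by lra. replace (8 * L^3) with ((2*L)^3) by ring.
    replace (27 * r^3) with ((3*r)^3) by ring. apply pow_incr; lra. }
  nra.
Qed.

Definition f0 z := (z ^ 2 - z ^ 4 / 3) / (1 - z ^ 2).
Definition f1 r z := (z ^ 2 - z ^ 4 / 3) / ((1 - z ^ 2) * (1 + r ^ 2 * (1 - z ^ 2) / 4)).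
Definition gg L r z := (z - z ^ 3 / 3) / (E L - r * z / 2).
Definition kk r z := (z ^ 2 - z ^ 4 / 3) / (1 + r ^ 2 * (1 - z ^ 2) / 4).

Lemma E_sq x : E x ^ 2 = 1 + x ^ 2.
Proof. unfold E. rewrite <- Rsqr_pow2. apply Rsqr_sqrt. nra. Qed.

Lemma E_pos x : 0 < E x.
Proof. unfold E. apply sqrt_lt_R0. nra. Qed.

Lemma cont_f0 a : a < 1 -> cont f0 0 a.
Proof. intros ha x hx. assert (1 - x ^ 2 <> 0) by nra. unfold f0. reg. Qed.

Lemma cont_f1 r a : a < 1 -> cont (f1 r) 0 a.
Proof.
  intros ha x hx. assert ((1 - x ^ 2) * (1 + r ^ 2 * (1 - x ^ 2) / 4) <> 0).
  { assert (0 < 1 - x^2) by nra. assert (0 <= r ^ 2) by nra.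
    assert (0 < 1 + r ^ 2 * (1 - x ^ 2) / 4) by nra. nra. }
  unfold f1. reg.
Qed.

Lemma cont_kk r : cont (kk r) 0 1.
Proof.
  intros x hx. assert (0 <= 1 - x ^ 2) by nra. assert (0 <= r ^ 2) by nra.
  assert (1 + r ^ 2 * (1 - x ^ 2) / 4 <> 0) by nra. unfold kk. reg.
Qed.

Lemma cont_gg L r b : (forall x, 0 <= x <= b -> 0 < E L - r * x / 2) -> cont (gg L r) 0 b.
Proof.
  intros h x hx. assert (E L - r * x / 2 <> 0) by (specialize (h x hx); lra). unfold gg. reg.
Qed.

Lemma cont_g2 r a b : r <> 0 -> b < 1 -> cont (fun z => 4 / (r ^ 2 * (1 - z) ^ 2)) a b.
Proof.
  intros hr hb x hx. assert (r ^ 2 * (1 - x) ^ 2 <> 0).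
  { apply Rmult_integral_contrapositive_currified; apply pow_nonzero; lra. }
  reg.
Qed.

Lemma Z_facts L r : 1 <= L -> 0 <= r -> r <= 2 * L ->
  0 <= Defs.Z L r <= L / E L /\ r * Defs.Z L r <= E L /\
  (0 < r -> Defs.Z L r = (E L - E (L - r)) / r).
Proof.
  intros hL hr0 hr.
  assert (h0 := E_pos L). assert (h1 := E_pos (L - r)).
  assert (hE0 := E_sq L). assert (hE1 := E_sq (L - r)).
  assert (hEL : L < E L) by nra.
  unfold Defs.Z. destruct (Req_EM_T r 0) as [e|ne].
  - subst r. split; [split|split].
    + apply div_ge_0; lra.
    + lra.
    + lra.
    + intros; lra.
  - assert (hr' : 0 < r) by lra.
    assert (hE10 : E (L - r) <= E L).
    { apply Rsqr_incr_0_var; unfold Rsqr; [nra|lra]. }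
    assert (hD : 1 + L * (L - r) <= E L * E (L - r)).
    { destruct (Rle_dec (1 + L * (L - r)) 0) as [hn|hp]; [nra|].
      apply Rsqr_incr_0_var; unfold Rsqr; [|nra].
      replace (E L * E (L - r) * (E L * E (L - r))) with (E L ^ 2 * E (L - r) ^ 2) by ring.
      rewrite hE0, hE1. nra. }
    split; [split|split].
    + apply div_ge_0; lra.
    + apply Rmult_le_reg_r with (r * E L). nra.
      replace ((E L - E (L - r)) / r * (r * E L)) with (E L ^ 2 - E L * E (L - r)) by (field; lra).
      replace (L / E L * (r * E L)) with (L * r) by (field; lra). nra.
    + replace (r * ((E L - E (L - r)) / r)) with (E L - E (L - r)) by (field; lra). lra.
    + intros; reflexivity.
Qed.

Lemma num_b x : 0 <= x <= 1 -> 0 <= x ^ 2 - x ^ 4 / 3 <= 1 /\ 0 <= 1 - x ^ 2 /\ 0 <= x - x ^ 3 / 3 <= 1.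
Proof.
  intros hx. assert (0 <= x ^ 2 <= 1) by nra.
  replace (x ^ 4) with (x ^ 2 * x ^ 2) by ring. replace (x ^ 3) with (x * x ^ 2) by ring.
  split; [split|split; [|split]]; nra.
Qed.

Theorem lemma11 (L r : R) (hL : 1 <= L) (hr0 : 0 <= r) (hr : r <= 2 * L) :
  Rabs (UL L r - U r) <= kappa1 * (r / (2 * E L)).
Proof.
  assert (h0 := E_pos L). assert (h1 := E_pos (L - r)).
  assert (hE0 := E_sq L). assert (hE1 := E_sq (L - r)).
  assert (hEL : L < E L) by nra.
  destruct (Z_facts L r hL hr0 hr) as [[hZ0 hZa] [hrZ hZr]].
  set (E0 := E L) in *. set (a := L / E0) in *. set (Zv := Defs.Z L r) in *.
  assert (ha0 : 0 <= a) by (apply div_ge_0; lra).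
  assert (ha1 : a < 1).
  { unfold a. apply Rmult_lt_reg_r with E0; auto. unfold Rdiv. rewrite Rmult_assoc, Rinv_l; lra. }
  assert (haE : a * E0 = L) by (unfold a; field; lra).
  assert (hPI := PI_RGT_0).
  set (A0 := RInt f0 0 a). set (A1 := RInt (f1 r) 0 Zv).
  set (A2 := RInt (gg L r) 0 Zv). set (A3 := RInt (kk r) 0 1).
  assert (hUL : UL L r - U r = / PI * (A0 - A1 - r / 2 * A2 - r ^ 2 / 4 * A3)).
  { unfold UL, B0, Br, U, A0, A1, A2, A3, f0, f1, gg, kk, Zv, a, E0. field. lra. }
  assert (hlin : A0 = RInt (f1 r) 0 a + r ^ 2 / 4 * RInt (kk r) 0 a).
  { apply RInt_lin; auto. apply cont_f0; auto. apply cont_f1; auto.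
    intros x hx. apply (cont_kk r x). lra.
    intros x hx. unfold f0, f1, kk.
    assert (0 < 1 - x^2) by nra. assert (0 <= r ^ 2) by nra.
    assert (0 < 1 + r ^ 2 * (1 - x ^ 2) / 4) by nra.
    field. lra. }
  assert (hch1 : A1 + RInt (f1 r) Zv a = RInt (f1 r) 0 a).
  { apply RInt_chasles; auto. apply cont_f1; auto. }
  assert (hch2 : RInt (kk r) 0 a + RInt (kk r) a 1 = A3).
  { apply RInt_chasles; auto; lra || apply cont_kk. }
  set (I1 := RInt (f1 r) Zv a) in *. set (J := RInt (kk r) a 1) in *.
  assert (hX : A0 - A1 - r / 2 * A2 - r ^ 2 / 4 * A3 = I1 - r ^ 2 / 4 * J - r / 2 * A2).
  { rewrite hlin, <- hch2, <- hch1. ring. }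
  assert (cf1 : cont (f1 r) Zv a).
  { intros x hx. apply (cont_f1 r a ha1). lra. }
  assert (hI1 : 0 <= I1).
  { replace 0 with (0 * (a - Zv)) by ring. apply RInt_lower; auto.
    intros x hx. unfold f1. apply div_ge_0.
    assert (0 < 1 - x^2) by nra. assert (0 <= r ^ 2) by nra.
    assert (0 < 1 + r ^ 2 * (1 - x ^ 2) / 4) by nra.
    apply Rmult_lt_0_compat; auto. apply num_b; lra. }
  assert (hI1u : I1 <= 129 * (r / E0)).
  { destruct (Rle_dec (3 * r) (2 * L)) as [hA|hB].
    - assert (I1 <= E0 ^ 2 * (a - Zv)).
      { apply RInt_upper; auto. intros x hx. unfold f1.
        destruct (num_b x) as [hn [ht hg]]; [lra|].
        assert (hxE : x * E0 <= L) by (rewrite <- haE; apply Rmult_le_compat_r; lra).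
        assert (hxE2 : x ^ 2 * E0 ^ 2 <= L ^ 2).
        { replace (x ^ 2 * E0 ^ 2) with ((x * E0) ^ 2) by ring. apply pow_incr.
          split; [apply Rmult_le_pos; lra | lra]. }
        assert (htE : 1 <= E0 ^ 2 * (1 - x ^ 2)) by nra.
        assert (0 <= r ^ 2) by nra.
        assert (0 <= r ^ 2 * (1 - x ^ 2)) by (apply Rmult_le_pos; auto).
        assert (hd : 1 - x ^ 2 <= (1 - x ^ 2) * (1 + r ^ 2 * (1 - x ^ 2) / 4)) by nra.
        apply div_le_c. assert (0 < 1 - x ^ 2) by nra. nra. nra. }
      destruct (Req_dec r 0) as [e|ne].
      + assert (Zv = a) by (unfold Zv, Defs.Z; destruct (Req_EM_T r 0); [reflexivity|lra]).
        rewrite H0, e in *. replace (E0 ^ 2 * (a - a)) with 0 in H by ring. rewrite Rdiv_0_l. lra.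
      + rewrite hZr in H by lra. unfold a in H.
        eapply Rle_trans; [exact H|].
        apply caseA_num; auto; lra.
    - assert (hrp : 0 < r) by lra.
      assert (hr2 : 0 < r ^ 2) by (apply pow_lt; lra).
      assert (cg2 : cont (fun z => 4 / (r ^ 2 * (1 - z) ^ 2)) Zv a) by (apply cont_g2; lra).
      assert (I1 <= RInt (fun z => 4 / (r ^ 2 * (1 - z) ^ 2)) Zv a).
      { apply RInt_le; auto. intros x hx. unfold f1.
        destruct (num_b x) as [hn [ht hg]]; [lra|].
        assert (h1x : 0 < 1 - x) by lra.
        assert (ht2 : (1 - x) ^ 2 <= (1 - x ^ 2) ^ 2).
        { apply pow_incr. nra. }
        assert (hc : 0 < 4 / (r ^ 2 * (1 - x) ^ 2)).
        { apply Rdiv_lt_0_compat; [lra|]. apply Rmult_lt_0_compat; auto. apply pow_lt; lra. }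
        assert (hc1 : 4 / (r ^ 2 * (1 - x) ^ 2) * (r ^ 2 * (1 - x) ^ 2 / 4) = 1).
        { field; repeat split; lra. }
        assert (hden2 : r ^ 2 * (1 - x) ^ 2 / 4 <= (1 - x ^ 2) * (1 + r ^ 2 * (1 - x ^ 2) / 4)).
        { assert (r ^ 2 * (1 - x) ^ 2 <= r ^ 2 * (1 - x ^ 2) ^ 2) by (apply Rmult_le_compat_l; lra).
          assert (0 <= (1 - x ^ 2) ^ 2) by (apply pow_le; lra). nra. }
        assert (0 < r ^ 2 * (1 - x) ^ 2 / 4).
        { apply Rdiv_lt_0_compat; [|lra]. apply Rmult_lt_0_compat; auto. apply pow_lt; lra. }
        apply div_le_c. lra.
        assert (4 / (r ^ 2 * (1 - x) ^ 2) * (r ^ 2 * (1 - x) ^ 2 / 4) <=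
                4 / (r ^ 2 * (1 - x) ^ 2) * ((1 - x ^ 2) * (1 + r ^ 2 * (1 - x ^ 2) / 4)))
          by (apply Rmult_le_compat_l; lra).
        lra. }
      rewrite (RInt_FTC _ (fun z => 4 / (r ^ 2 * (1 - z))) Zv a) in H; auto.
      2:{ intros x hx. apply deriv_F; lra. }
      assert (0 <= 4 / (r ^ 2 * (1 - Zv))).
      { apply div_ge_0; [|lra]. apply Rmult_lt_0_compat; auto; lra. }
      assert (4 / (r ^ 2 * (1 - a)) <= 129 * (r / E0)).
      { unfold a. apply caseB_num; auto; lra. }
      lra. }
  assert (hJ0 : 0 <= J /\ J <= 1 * (1 - a)).
  { assert (ck : cont (kk r) a 1) by (intros x hx; apply (cont_kk r x); lra).
    split.
    - replace 0 with (0 * (1 - a)) by ring. apply RInt_lower; auto; try lra.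
      intros x hx. unfold kk. destruct (num_b x) as [hn [ht hg]]; [lra|].
      assert (0 <= r ^ 2) by nra. apply div_ge_0; [|lra].
      assert (0 <= r ^ 2 * (1 - x ^ 2)) by (apply Rmult_le_pos; auto). lra.
    - apply RInt_upper; auto; try lra.
      intros x hx. unfold kk. destruct (num_b x) as [hn [ht hg]]; [lra|].
      assert (0 <= r ^ 2) by nra.
      assert (0 <= r ^ 2 * (1 - x ^ 2)) by (apply Rmult_le_pos; auto).
      apply div_le_c; lra. }
  assert (hden : forall x, 0 <= x <= Zv -> E0 / 2 <= E L - r * x / 2).
  { intros x hx. fold E0. nra. }
  assert (hA2 : 0 <= A2 /\ A2 <= 2 / E0 * (Zv - 0)).
  { assert (cg : cont (gg L r) 0 Zv).
    { apply cont_gg. intros x hx. specialize (hden x hx). lra. }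
    split.
    - replace 0 with (0 * (Zv - 0)) by ring. apply RInt_lower; auto.
      intros x hx. specialize (hden x hx). unfold gg. apply div_ge_0. lra. nra.
    - apply RInt_upper; auto.
      intros x hx. specialize (hden x hx). unfold gg. apply div_le_c. lra.
      replace (2 / E0 * (E L - r * x / 2)) with (2 * ((E L - r * x / 2) / E0)) by (field; lra).
      assert (1 / 2 <= (E L - r * x / 2) / E0).
      { replace ((E L - r * x / 2) / E0) with (1/2 + (E L - r * x / 2 - E0/2)/E0) by (field; lra).
        assert (0 <= (E L - r * x / 2 - E0/2)/E0) by (apply div_ge_0; lra). lra. }
      nra. }
  assert (hq : (1 - a) * E0 * (E0 + L) = 1).
  { replace ((1 - a) * E0 * (E0 + L)) with ((E0 - a * E0) * (E0 + L)) by ring.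
    rewrite haE. replace ((E0 - L) * (E0 + L)) with (E0^2 - L^2) by ring. lra. }
  assert (hJr : r ^ 2 / 4 * J <= r / E0).
  { assert (r ^ 2 / 4 * J <= r ^ 2 / 4 * (1 - a)) by nra.
    assert (r ^ 2 / 4 * (1 - a) <= r / E0); [|lra].
    apply Rmult_le_reg_r with (E0 * (E0 + L)). nra.
    replace (r / E0 * (E0 * (E0 + L))) with (r * (E0 + L)) by (field; lra).
    replace (r ^ 2 / 4 * (1 - a) * (E0 * (E0 + L))) with (r ^ 2 / 4 * ((1 - a) * E0 * (E0 + L))) by ring.
    rewrite hq. nra. }
  assert (hA2r : r / 2 * A2 <= r / E0).
  { assert (r / 2 * A2 <= r / 2 * (2 / E0 * (Zv - 0))) by nra.
    assert (r / 2 * (2 / E0 * (Zv - 0)) <= r / E0); [|lra].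
    replace (r / 2 * (2 / E0 * (Zv - 0))) with (r / E0 * Zv) by (field; lra).
    assert (0 <= r / E0) by (apply div_ge_0; lra). nra. }
  assert (hrE : 0 <= r / E0) by (apply div_ge_0; lra).
  rewrite hUL, hX, Rabs_mult, Rabs_right.
  2:{ left. apply Rinv_0_lt_compat. lra. }
  unfold kappa1.
  replace (258 / PI * (r / (2 * E0))) with (/ PI * (129 * (r / E0))) by (field; split; lra).
  apply Rmult_le_compat_l. left; apply Rinv_0_lt_compat; lra.
  apply Rabs_le. split; nra.
Qed.
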